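(* Let $X$ be a random element of a subspace $\mathbb{X}\subseteq\mathbb{R}^d$ and $Y\in\{+1,-1\}$ its label, with $\alpha=\Pr(Y=+1)\in(0,1)$. Let $(X',Y')$ be an independent copy of $(X,Y)$. Let $\mathbb{H}$ be a real inner product space, $\mathbb{V}$ a real inner product space, $r>0$, and $\phi:\mathbb{H}\to\mathbb{V}$ a map with $\|\phi(u)\|=r$ for all $u\in\mathbb{H}$. Let $\mathbb{F}_1$ be a set of maps $F_1:\mathbb{X}\to\mathbb{H}$, and let $\mathbb{F}_2$ be the set of functions $f_2:\mathbb{H}\to\mathbb{R}$, $f_2(u)=\langle w,\phi(u)\rangle$, with $w\in\mathbb{V}$, $\|w\|\le 1/r$. For $f_2\in\mathbb{F}_2$, $F_1\in\mathbb{F}_1$ define the risk $$R(f_2\circ F_1,X,Y)=E_{X,Y}\big[-Y\,f_2(F_1(X))\big].$$ Define $$\mathbb{D}=\operatorname*{argmin}_{F_1\in\mathbb{F}_1}E_{X,X'\mid Y\neq Y'}\Big(-\big\|\phi\circ F_1(X)-\phi\circ F_1(X')\big\|^2\Big),$$ $$\mathbb{S}=\Big\{F_1\in\mathbb{F}_1 : \Pr\big(\phi\circ F_1(X)=\phi\circ F_1(X')\mid Y=Y'\big)=\Pr\big(\phi\circ F_1(X)\neq\phi\circ F_1(X')\mid Y\neq Y'\big)=1\Big\},$$ $$\mathbb{F}^\star=\Big\{f_2\circ F_1 : f_2\circ F_1\in\operatorname*{argmin}_{f_2\in\mathbb{F}_2,\,F_1\in\mathbb{F}_1}R(f_2\circ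 F_1,X,Y)\Big\},\qquad \mathbb{F}_1^\star=\{F_1 : \exists f_2,\ f_2\circ F_1\in\mathbb{F}^\star\}.$$ If $\mathbb{D}\cap\mathbb{S}\neq\emptyset$ and $|\operatorname{supp}(\phi\circ F_1(X))|>4$ for every $F_1\in\mathbb{F}_1\setminus\mathbb{S}$, then $\mathbb{F}_1^\star=\mathbb{D}\cap\mathbb{S}$.
   Context: $\operatorname{supp}(Z)$ denotes the support of the random element $Z$, and $|\cdot|$ denotes cardinality. $E_{X,X'\mid Y\neq Y'}$ denotes expectation over the pair $(X,X')$ conditional on $Y\neq Y'$. The loss used is $\ell(\hat y,y)=-y\hat y$ (equivalent to the hinge loss here since $|f_2(F_1(x))|\le 1$). *)

(* Defs.v *)
From HB Require Import structures.
From mathcomp Require Import all_boot all_order all_algebra.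
From mathcomp Require Import all_classical all_reals all_analysis.
Set Implicit Arguments. Unset Strict Implicit. Unset Printing Implicit Defensive.
Import Order.TTheory GRing.Theory Num.Theory.
Local Open Scope classical_set_scope.
Local Open Scope ring_scope.

Definition is_inner_product (R : realType) (V : lmodType R) (ip : V -> V -> R) : Prop :=
  [/\ (forall u v, ip u v = ip v u),
      (forall (a : R) u v w, ip (a *: u + v) w = a * ip u w + ip v w),
      (forall v, 0 <= ip v v) &
      (forall v, ip v v = 0 -> v = 0)].

Definition ipnorm (R : realType) (V : lmodType R) (ip : V -> V -> R) (v : V) : R :=
  Num.sqrt (ip v v).

Local Open Scope ereal_scope.

Definition condP d (T : measurableType d) (R : realType)
  (mu : set T -> \bar R) (A B : set T) : \bar R :=
  mu (A `&` B) * ((fine (mu B))^-1)%:E.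

Definition condE d (T : measurableType d) (R : realType)
  (mu : {measure set T -> \bar R}) (B : set T) (f : T -> R) : \bar R :=
  (\int[mu]_(z in B) (f z)%:E) * ((fine (mu B))^-1)%:E.

(* Topological support of the law of a V-valued random element Z
   (w.r.t. the inner-product norm): points all of whose open balls have
   positive probability. *)
Definition ip_support d (T : measurableType d) (R : realType)
  (P : {measure set T -> \bar R}) (V : lmodType R) (ip : V -> V -> R)
  (Z : T -> V) : set V :=
  [set v | forall e : R, (0 < e)%R ->
     0 < P [set t | (ipnorm ip (Z t - v) < e)%R]].

(* |S| > 4 : S contains 5 pairwise distinct points. *)
Definition card_gt4 (V : eqType) (S : set V) : Prop :=
  exists s : seq V, [/\ uniq s, size s = 5%N & [set` s] `<=` S].

Definition F2set (R : realType) (H V : lmodType R) (ip : V -> V -> R)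
  (phi : H -> V) (r : R) : set (H -> R) :=
  [set f2 | exists w : V, (ipnorm ip w <= r^-1)%R /\ f2 = (fun u => ip w (phi u))].

Definition risk d (Omega : measurableType d) (R : realType)
  (P : {measure set Omega -> \bar R}) (n : nat)
  (X : Omega -> 'rV[R]_n) (Y : Omega -> R) (g : 'rV[R]_n -> R) : \bar R :=
  \int[P]_w (- Y w * g (X w))%:E.

Definition Fstar d (Omega : measurableType d) (R : realType)
  (P : {measure set Omega -> \bar R}) (n : nat)
  (X : Omega -> 'rV[R]_n) (Y : Omega -> R)
  (H V : lmodType R) (ip : V -> V -> R) (phi : H -> V) (r : R)
  (F1set : set ('rV[R]_n -> H)) : set ('rV[R]_n -> R) :=
  [set g | (exists f2 F1, [/\ F2set ip phi r f2, F1set F1 & g = f2 \o F1]) /\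
     forall f2' F1', F2set ip phi r f2' -> F1set F1' ->
       risk P X Y g <= risk P X Y (f2' \o F1')].

Definition F1star d (Omega : measurableType d) (R : realType)
  (P : {measure set Omega -> \bar R}) (n : nat)
  (X : Omega -> 'rV[R]_n) (Y : Omega -> R)
  (H V : lmodType R) (ip : V -> V -> R) (phi : H -> V) (r : R)
  (F1set : set ('rV[R]_n -> H)) : set ('rV[R]_n -> H) :=
  [set F1 | F1set F1 /\ exists f2, F2set ip phi r f2 /\
      Fstar P X Y ip phi r F1set (f2 \o F1)].

(* (X,Y) and an independent copy (X',Y') realized on Omega x Omega with
   the product probability P \x P:  X = X \o fst, X' = X \o snd, etc.  *)

Definition sameLab d (Omega : measurableType d) (R : realType)
  (Y : Omega -> R) : set (Omega * Omega) := [set z | Y z.1 = Y z.2].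
Definition diffLab d (Omega : measurableType d) (R : realType)
  (Y : Omega -> R) : set (Omega * Omega) := [set z | Y z.1 <> Y z.2].

Definition Dset d (Omega : measurableType d) (R : realType)
  (P : probability Omega R) (n : nat)
  (X : Omega -> 'rV[R]_n) (Y : Omega -> R)
  (H V : lmodType R) (ip : V -> V -> R) (phi : H -> V)
  (F1set : set ('rV[R]_n -> H)) : set ('rV[R]_n -> H) :=
  let obj F1 := condE (P \x P) (diffLab Y)
       (fun z => - (ipnorm ip (phi (F1 (X z.1)) - phi (F1 (X z.2)))) ^+ 2)%R in
  [set F1 | F1set F1 /\ forall F1', F1set F1' -> obj F1 <= obj F1'].

Definition Sset d (Omega : measurableType d) (R : realType)
  (P : probability Omega R) (n : nat)
  (X : Omega -> 'rV[R]_n) (Y : Omega -> R)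
  (H V : lmodType R) (phi : H -> V)
  (F1set : set ('rV[R]_n -> H)) : set ('rV[R]_n -> H) :=
  [set F1 | F1set F1 /\
     condP (P \x P) [set z | phi (F1 (X z.1)) = phi (F1 (X z.2))] (sameLab Y) = 1 /\
     condP (P \x P) [set z | phi (F1 (X z.1)) <> phi (F1 (X z.2))] (diffLab Y) = 1].

(* Main.v *)
Require Import Defs.
From HB Require Import structures.
From mathcomp Require Import all_boot all_order all_algebra.
From mathcomp Require Import all_classical all_reals all_analysis.
From mathcomp Require Import measurable_realfun.
From mathcomp Require Import ring lra.
Set Implicit Arguments. Unset Strict Implicit. Unset Printing Implicit Defensive.
Import Order.TTheory GRing.Theory Num.Theory.
Local Open Scope classical_set_scope.
Local Open Scope ring_scope.
Section IP.
Variables (R : realType) (V : lmodType R) (ip : V -> V -> R).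
Hypothesis hip : is_inner_product ip.

Lemma ipC u v : ip u v = ip v u.
Proof. by case: hip. Qed.
Lemma ip_lin a u v w : ip (a *: u + v) w = a * ip u w + ip v w.
Proof. by case: hip. Qed.
Lemma ip_ge0 v : 0 <= ip v v.
Proof. by case: hip. Qed.
Lemma ip_eq0 v : ip v v = 0 -> v = 0.
Proof. by case: hip => _ _ _; apply. Qed.
Lemma ip0l w : ip 0 w = 0.
Proof.
have h := ip_lin 1 0 0 w.
rewrite scale1r addr0 mul1r in h.
lra.
Qed.
Lemma ipDl u v w : ip (u + v) w = ip u w + ip v w.
Proof. by rewrite -[u]scale1r ip_lin mul1r scale1r. Qed.
Lemma ipZl a u w : ip (a *: u) w = a * ip u w.
Proof. by rewrite -[a *: u]addr0 ip_lin ip0l addr0. Qed.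
Lemma ipNl u w : ip (- u) w = - ip u w.
Proof. by rewrite -scaleN1r ipZl mulN1r. Qed.
Lemma ipBl u v w : ip (u - v) w = ip u w - ip v w.
Proof. by rewrite ipDl ipNl. Qed.
Lemma ipDr u v w : ip w (u + v) = ip w u + ip w v.
Proof. by rewrite ipC ipDl !(ipC w). Qed.
Lemma ipZr a u w : ip w (a *: u) = a * ip w u.
Proof. by rewrite ipC ipZl ipC. Qed.
Lemma ipNr u w : ip w (- u) = - ip w u.
Proof. by rewrite ipC ipNl ipC. Qed.
Lemma ipBr u v w : ip w (u - v) = ip w u - ip w v.
Proof. by rewrite ipDr ipNr. Qed.
Lemma ipnorm_sq v : ipnorm ip v ^+ 2 = ip v v.
Proof. by rewrite /ipnorm sqr_sqrtr // ip_ge0. Qed.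
Lemma ipnorm_ge0 v : 0 <= ipnorm ip v.
Proof. exact: sqrtr_ge0. Qed.
Lemma ip_bound u v : `|ip u v| <= (ip u u + ip v v) / 2.
Proof.
have h1 := ip_ge0 (u - v); have h2 := ip_ge0 (u + v).
rewrite !(ipDl, ipDr, ipNl, ipNr) opprK (ipC v u) in h1 h2.
rewrite ler_norml; apply/andP; split; lra.
Qed.
End IP.
Section Gen.
Local Open Scope ereal_scope.
Context d (T : measurableType d) (R : realType) (mu : {measure set T -> \bar R}).

Lemma int_bnd (f : T -> R) (M : R) : mu setT < +oo -> measurable_fun setT f ->
  (forall x, (`|f x| <= M)%R) -> mu.-integrable setT (EFin \o f).
Proof.
move=> fin mf fM; apply: measurable_bounded_integrable => //.
exists M; split; first exact: num_real.
by move=> y My x _; apply: le_trans (ltW My).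
Qed.

Lemma ae0_set (g : T -> \bar R) : (forall x, 0 <= g x) -> measurable_fun setT g ->
  \int[mu]_x g x = 0 -> exists N, [/\ measurable N, mu N = 0 & forall x, g x != 0 -> N x].
Proof.
move=> g0 mg ig.
have : \int[mu]_(x in setT) `|g x| = 0.
  by rewrite -ig; apply: eq_integral => x _; rewrite gee0_abs.
move/(@ae_eq_integral_abs _ _ _ mu setT measurableT g mg) => [N [mN N0 sN]].
exists N; split => // x gx; apply: sN => /=; move=> /(_ I) h.
by move: gx; rewrite h eqxx.
Qed.

Lemma ae0_pt (g : T -> \bar R) (A : set T) : (forall x, 0 <= g x) -> measurable_fun setT g ->
  \int[mu]_x g x = 0 -> measurable A -> 0 < mu A -> exists x, A x /\ g x = 0.
Proof.
move=> g0 mg ig mA A0; have [N [mN N0 sN]] := @ae0_set g g0 mg ig.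
apply: contrapT => hn.
have AN : A `<=` N.
  move=> x Ax; apply: sN; apply/negP => /eqP gx; apply: hn; by exists x.
have h : mu A <= mu N by apply: le_measure => //; rewrite inE.
by move: h; rewrite N0 => h; move: A0; rewrite lt_neqAle => /andP[/negP nA _]; apply: nA;
  rewrite eq_le h measure_ge0.
Qed.

End Gen.
Section BM.
Context d (T : measurableType d) (R : realType).
Definition bm (f : T -> R) := measurable_fun setT f /\ exists M : R, forall x, `|f x| <= M.

Lemma bm_cst c : bm (fun _ => c).
Proof. by split; [exact: measurable_cst | exists `|c|]. Qed.

Lemma bmD {f g} : bm f -> bm g -> bm (fun x => f x + g x).
Proof.
move=> [mf [M1 h1]] [mg [M2 h2]]; split; first exact: measurable_funD.
by exists (M1 + M2) => x; apply: le_trans (ler_normD _ _) _; apply: lerD.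
Qed.

Lemma bmM {f g} : bm f -> bm g -> bm (fun x => f x * g x).
Proof.
move=> [mf [M1 h1]] [mg [M2 h2]]; split; first exact: measurable_funM.
exists (M1 * M2) => x; rewrite normrM; apply: ler_pM => //.
Qed.

Lemma bmB {f g} : bm f -> bm g -> bm (fun x => f x - g x).
Proof.
move=> hf hg; have := bmD hf (bmM (bm_cst (-1)) hg).
by rewrite (_ : (fun x => _) = (fun x => f x - g x)) //; apply: funext => x; rewrite mulN1r.
Qed.

Lemma bmN {f} : bm f -> bm (fun x => - f x).
Proof.
move=> hf; have := bmM (bm_cst (-1)) hf.
by rewrite (_ : (fun x => _) = (fun x => - f x)) //; apply: funext => x; rewrite mulN1r.
Qed.

Lemma bm_int (mu : {measure set T -> \bar R}) f : (mu setT < +oo)%E -> bm f ->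
  mu.-integrable setT (EFin \o f).
Proof. by move=> fin [mf [M hM]]; exact: (int_bnd fin mf hM). Qed.

Lemma RintE (mu : {measure set T -> \bar R}) f : mu.-integrable setT (EFin \o f) ->
  (\int[mu]_x (f x)%:E)%E = (\int[mu]_x f x)%:E.
Proof. by move=> h; rewrite fineK // integrable_fin_num. Qed.
End BM.
Arguments bm_cst {d T R}.
Ltac bmt := repeat first [exact: bm_cst | apply: bmB | apply: bmM | apply: bmD | apply: bmN].

Lemma bm_comp d1 d2 (T1 : measurableType d1) (T2 : measurableType d2) (R : realType)
  (g : T1 -> T2) (f : T2 -> R) : measurable_fun setT g -> bm f -> bm (fun x => f (g x)).
Proof.
move=> mg [mf [M hM]]; split; first exact: measurableT_comp.
by exists M.
Qed.

Section Gen2.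
Context d (T : measurableType d) (R : realType) (mu : {measure set T -> \bar R}).

Lemma condP_full (A B M : set T) (x : R) : measurable A -> measurable B -> measurable M ->
  mu M = 0%E -> B `<=` A `|` M -> mu B = x%:E -> x != 0 -> condP mu A B = 1%E.
Proof.
move=> mA mB mM M0 BAM Bx x0.
have mAB : measurable (A `&` B) by exact: measurableI.
have h1 : (mu (A `&` B) <= mu B)%E by apply: le_measure; rewrite ?inE //; exact: subIsetr.
have h2 : (mu B <= mu (A `&` B))%E.
  apply: (@le_trans _ _ (mu ((A `&` B) `|` M))).
    apply: le_measure; rewrite ?inE //; first exact: measurableU.
    by move=> z Bz; case: (BAM z Bz) => h; [left|right].
  apply: le_trans (measureU2 _ mAB mM) _.
  by rewrite [X in (_ + X)%E](_ : _ = 0%E); first [by rewrite adde0 | exact: M0].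
have hAB : mu (A `&` B) = x%:E by apply/eqP; rewrite eq_le -Bx h1 h2.
rewrite /condP [X in (X * _)%E](_ : _ = x%:E); last exact: hAB.
rewrite [X in fine X](_ : _ = x%:E); last exact: Bx.
by rewrite /= -EFinM mulfV.
Qed.

Lemma condP_null (A B M : set T) : measurable A -> measurable B -> measurable M ->
  mu M = 0%E -> A `&` B `<=` M -> condP mu A B = 0%E.
Proof.
move=> mA mB mM M0 ABM.
have : (mu (A `&` B) <= mu M)%E by apply: le_measure; rewrite ?inE //; exact: measurableI.
have -> : mu M = 0%E by exact: M0.
move=> h.
have hAB : mu (A `&` B) = 0%E by apply/eqP; rewrite eq_le h measure_ge0.
by rewrite /condP [X in (X * _)%E](_ : _ = 0%E) ?mul0e //; exact: hAB.
Qed.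

Lemma Rint_ae0 (f : T -> R) (M : set T) : (mu setT < +oo)%E -> bm f -> measurable M ->
  mu M = 0%E -> (forall z, ~ M z -> f z = 0) -> \int[mu]_z f z = 0.
Proof.
move=> fin hf mM M0 fM.
rewrite /Rintegral (negligible_integral mM measurableT (bm_int fin hf) M0).
rewrite (eq_integral (fun _ => 0%E)); first by rewrite integral0.
by move=> z; rewrite inE => -[_ nM] /=; rewrite fM.
Qed.
Lemma condP1 (A B : set T) (x : R) : mu B = x%:E -> x != 0 ->
  condP mu A B = 1%E -> mu (A `&` B) = x%:E.
Proof.
move=> Bx x0; rewrite /condP [X in fine X](_ : _ = x%:E); last exact: Bx.
move=> h; rewrite -[LHS]mule1 -(mulVf x0) EFinM muleA h /= mul1e //.
Qed.

Lemma measure_diff0 (A B : set T) (x : R) : measurable A -> measurable B ->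
  mu B = x%:E -> mu (A `&` B) = x%:E -> mu (B `\` A) = 0%E.
Proof.
move=> mA mB Bx ABx.
have fin : (mu B < +oo)%E by rewrite Bx ltry.
apply: etrans (measureD mB mA fin) _.
change (mu B - mu (B `&` A) = 0)%E.
by rewrite setIC ABx Bx /= -EFinB subrr.
Qed.

Lemma measureD_null (A N : set T) : measurable A -> measurable N -> mu N = 0%E ->
  mu (A `\` N) = mu A.
Proof.
move=> mA mN N0; apply/eqP; rewrite eq_le; apply/andP; split.
  apply: le_measure.
  - by rewrite inE; exact: measurableD.
  - by rewrite inE.
  - exact: subDsetl.
apply: (@le_trans _ _ (mu ((A `\` N) `|` N))).
  apply: le_measure.
  - by rewrite inE.
  - by rewrite inE; apply: measurableU => //; exact: measurableD.
  - by move=> z Az; case: (pselect (N z)) => h; [right | left].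
apply: le_trans (measureU2 _ _ mN) _; first exact: measurableD.
change (mu (A `\` N) + mu N <= mu (A `\` N))%E.
by rewrite N0 adde0.
Qed.

Lemma null_U (A B : set T) : measurable A -> measurable B -> mu A = 0%E -> mu B = 0%E ->
  mu (A `|` B) = 0%E.
Proof.
move=> mA mB A0 B0; apply/eqP; rewrite eq_le measure_ge0 andbT.
apply: le_trans (measureU2 _ mA mB) _.
change (mu A + mu B <= 0)%E.
by rewrite A0 B0 adde0.
Qed.
End Gen2.
Section Prob.
Context (R : realType) (d : measure_display) (Omega : measurableType d)
  (P : probability Omega R) (Y : Omega -> R).
Hypothesis Ypm : forall w, Y w = 1 \/ Y w = -1.
Hypothesis mY : measurable_fun setT Y.
Hypothesis Ha : (0 < P [set w | Y w = 1%R] < 1)%E.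

Definition pa := fine (P [set w | Y w = 1]).
Local Notation a := pa.
Local Notation b := (1 - pa).

Lemma mYset (c : R) : measurable [set w | Y w = c].
Proof.
rewrite (_ : [set w | Y w = c] = Y @^-1` [set c]) //.
by rewrite -[X in measurable X]setTI; apply: mY => //; exact: measurable_set1.
Qed.

Lemma Pa : P [set w | Y w = 1] = a%:E.
Proof.
rewrite /pa fineK // ge0_fin_numE ?measure_ge0 //.
by case/andP: Ha => _ h; apply: lt_trans h _; rewrite ltry.
Qed.

Lemma a_gt0 : 0 < a.
Proof. by case/andP: Ha; rewrite Pa lte_fin. Qed.
Lemma a_lt1 : a < 1.
Proof. by case/andP: Ha; rewrite Pa lte_fin. Qed.

Lemma Pb : P [set w | Y w = -1] = b%:E.
Proof.
have -> : [set w | Y w = -1] = ~` [set w | Y w = 1].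
  apply/seteqP; split => w /=.
    by move=> ->; apply/eqP; rewrite eq_sym -subr_eq0 opprK (_ : 1 + 1 = 2) //; lra.
  by case: (Ypm w) => // ->.
rewrite probability_setC; [by rewrite Pa | exact: mYset].
Qed.

Lemma Yind w : Y w = 2 * (\1_[set w | Y w = 1] w) - 1.
Proof.
rewrite indicE; case: (Ypm w) => h; rewrite h.
  by rewrite mem_set //=; lra.
by rewrite memNset //=; [lra | rewrite h; move/eqP; rewrite -subr_eq0; lra].
Qed.

Lemma bmY : bm Y.
Proof.
split => //; exists 1 => w; case: (Ypm w) => ->; rewrite ?normrN normr1 //.
Qed.

Lemma PT : (P setT < +oo)%E.
Proof. by rewrite probability_setT ltry. Qed.

Lemma Rint_cst c : \int[P]_x c = c.
Proof.
rewrite Rintegral_cst //.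
rewrite [fine _](_ : _ = 1) ?mulr1 //.
by rewrite -[1]/(fine 1%E); congr fine; exact: probability_setT.
Qed.

Lemma Rint_lin (f g : Omega -> R) c1 c2 : bm f -> bm g ->
  \int[P]_x (c1 * f x + c2 * g x) = c1 * \int[P]_x f x + c2 * \int[P]_x g x.
Proof.
move=> hf hg; rewrite RintegralD //; last 2 first.
- exact/(bm_int PT)/bmM/hf/bm_cst.
- exact/(bm_int PT)/bmM/hg/bm_cst.
by rewrite !RintegralZl //; apply: bm_int PT _.
Qed.

Lemma EY : \int[P]_x Y x = a - b.
Proof.
have bI : bm (fun w => \1_[set w | Y w = 1] w : R).
  split; first by apply: measurable_indic; exact: mYset.
  by exists 1 => x; rewrite indicE; case: (_ \in _); rewrite ?normr1 ?normr0.
rewrite (@eq_Rintegral _ _ _ P setT (fun x => 2 * (\1_[set w | Y w = 1] x) + (-1) * 1));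
  last by move=> x _; rewrite Yind; lra.
rewrite Rint_lin //; last exact: bm_cst.
have -> : \int[P]_x (\1_[set w | Y w = 1] x : R) = a.
  by rewrite /Rintegral integral_indic ?setIT ?Pa //; exact: mYset.
rewrite Rint_cst; lra.
Qed.


Local Open Scope ereal_scope.
Lemma PPT : (P \x P) setT = 1.
Proof.
rewrite -setXTT product_measure1E //.
by rewrite [X in X * _](_ : _ = 1) ?[X in _ * X](_ : _ = 1) ?mule1 //;
  exact: probability_setT.
Qed.
Lemma PPfin : (P \x P) setT < +oo.
Proof. by rewrite PPT ltry. Qed.
Local Close Scope ereal_scope.

Definition epsY (z : Omega * Omega) := (1 - Y z.1 * Y z.2) / 2.

Lemma bmY1 : bm (fun z : Omega * Omega => Y z.1).
Proof. exact: (bm_comp measurable_fst bmY). Qed.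
Lemma bmY2 : bm (fun z : Omega * Omega => Y z.2).
Proof. exact: (bm_comp measurable_snd bmY). Qed.
Lemma bm_eps : bm epsY.
Proof.
apply: bmM; last exact: bm_cst.
by apply: bmB; [exact: bm_cst | exact: bmM bmY1 bmY2].
Qed.

Lemma inner_eps (x : Omega) (c : R) :
  \int[P]_y ((1 - Y x * Y y) / 2 * c) = c * ((1 - Y x * (a - b)) / 2).
Proof.
rewrite (@eq_Rintegral _ _ _ P setT (fun y => (c / 2) * 1 + (- (Y x * c) / 2) * Y y));
  last by move=> y _; rewrite /=; ring.
by rewrite Rint_lin ?Rint_cst ?EY //; [ring | exact: bm_cst | exact: bmY].
Qed.

Lemma Fub1 (h : Omega -> R) : bm h ->
  \int[(P \x P)%E]_z (epsY z * h z.1) = \int[P]_x (h x * ((1 - Y x * (a - b)) / 2)).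
Proof.
move=> hh; rewrite /Rintegral -integral12_prod_meas1; last first.
  apply: (bm_int PPfin); apply: bmM; first exact: bm_eps.
  exact: (bm_comp measurable_fst hh).
congr fine; apply: eq_integral => x _; rewrite /fubini_F /= /epsY /=.
rewrite RintE; first by rewrite inner_eps.
apply: (bm_int PT); apply: bmM; last exact: bm_cst.
by bmt; exact: bmY.
Qed.

Lemma Fub2 (h : Omega -> R) : bm h ->
  \int[(P \x P)%E]_z (epsY z * h z.2) = \int[P]_x (h x * ((1 - Y x * (a - b)) / 2)).
Proof.
move=> hh; rewrite /Rintegral -integral21_prod_meas1; last first.
  apply: (bm_int PPfin); apply: bmM; first exact: bm_eps.
  exact: (bm_comp measurable_snd hh).
congr fine; apply: eq_integral => y _; rewrite /fubini_G /= /epsY /=.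
rewrite RintE.
  rewrite (@eq_Rintegral _ _ _ P setT (fun x => (1 - Y y * Y x) / 2 * h y)).
    by rewrite inner_eps.
  by move=> x _ /=; rewrite (mulrC (Y x)).
apply: (bm_int PT); apply: bmM; last exact: bm_cst.
by bmt; exact: bmY.
Qed.


Lemma Rint_eps : \int[(P \x P)%E]_z epsY z = 2 * a * b.
Proof.
rewrite (@eq_Rintegral _ _ _ (P \x P)%E setT (fun z => epsY z * (fun _ => 1) z.1));
  last by move=> z _; rewrite mulr1.
rewrite (Fub1 (bm_cst 1)).
rewrite (@eq_Rintegral _ _ _ P setT (fun x => (1/2) * 1 + (- (a - b) / 2) * Y x));
  last by move=> x _; rewrite /=; field.
by rewrite Rint_lin ?Rint_cst ?EY //; [field | exact: bm_cst | exact: bmY].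
Qed.

Lemma epsE z : epsY z = 1 \/ epsY z = 0.
Proof. by rewrite /epsY; case: (Ypm z.1) => ->; case: (Ypm z.2) => ->; [right|left|left|right]; field. Qed.

Lemma pm_diff (y1 y2 : R) : (y1 = 1 \/ y1 = -1) -> (y2 = 1 \/ y2 = -1) ->
  (y1 <> y2 <-> (1 - y1 * y2) / 2 = 1).
Proof.
by case=> ->; case=> ->; split=> h; first [by exfalso; apply: h | by field | by exfalso; lra | lra].
Qed.

Lemma pm_same (y1 y2 : R) : (y1 = 1 \/ y1 = -1) -> (y2 = 1 \/ y2 = -1) ->
  (y1 = y2 <-> (1 - y1 * y2) / 2 = 0).
Proof.
by case=> ->; case=> ->; split=> h; first [by field | by exfalso; lra | lra].
Qed.

Lemma diff_eps z : diffLab Y z <-> epsY z = 1.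
Proof. exact: pm_diff. Qed.

Lemma same_eps z : sameLab Y z <-> epsY z = 0.
Proof. exact: pm_same. Qed.

Lemma mdiff : measurable (diffLab Y).
Proof.
rewrite (_ : diffLab Y = epsY @^-1` [set 1]).
  by rewrite -[X in measurable X]setTI; apply: (bm_eps.1) => //; exact: measurable_set1.
by apply/seteqP; split => z /=; rewrite diff_eps.
Qed.

Lemma msame : measurable (sameLab Y).
Proof.
rewrite (_ : sameLab Y = epsY @^-1` [set 0]).
  by rewrite -[X in measurable X]setTI; apply: (bm_eps.1) => //; exact: measurable_set1.
by apply/seteqP; split => z /=; rewrite same_eps.
Qed.

Lemma int_diff (g : Omega * Omega -> R) : bm g ->
  (\int[(P \x P)%E]_(z in diffLab Y) (g z)%:E = (\int[(P \x P)%E]_z (epsY z * g z))%:E)%E.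
Proof.
move=> hg; rewrite integral_mkcond -RintE; last first.
  by apply: (bm_int PPfin); apply: bmM => //; exact: bm_eps.
apply: eq_integral => z _; rewrite patchE.
case: (epsE z) => e.
  by rewrite mem_set ?e ?mul1r //; apply/diff_eps.
by rewrite memNset ?e ?mul0r // => /diff_eps; rewrite e => /eqP; rewrite eq_sym oner_eq0.
Qed.

Lemma PP_diff : (P \x P)%E (diffLab Y) = (2 * a * b)%:E.
Proof.
rewrite -[diffLab Y]setIT -integral_indic //; last exact: mdiff.
rewrite (eq_integral (fun z => (epsY z)%:E)); last first.
  move=> z _; rewrite indicE; case: (epsE z) => e; rewrite e.
    by rewrite mem_set //; apply/diff_eps.
  by rewrite memNset // => /diff_eps; rewrite e => /eqP; rewrite eq_sym oner_eq0.
by rewrite RintE ?Rint_eps //; exact: (bm_int PPfin bm_eps).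
Qed.

Lemma PP_same : (P \x P)%E (sameLab Y) = (1 - 2 * a * b)%:E.
Proof.
rewrite -[sameLab Y]setIT -integral_indic //; last exact: msame.
rewrite (eq_integral (fun z => (1 - epsY z)%:E)); last first.
  move=> z _; rewrite indicE; case: (epsE z) => e; rewrite e.
    by rewrite memNset ?subrr // => /same_eps; rewrite e => /eqP; rewrite oner_eq0.
  by rewrite mem_set ?subr0 //; apply/same_eps.
rewrite RintE ?RintegralB ?Rint_eps //.
- rewrite Rintegral_cst //. 
  rewrite [fine _](_ : _ = 1) ?mul1r //.
  by rewrite -[1]/(fine 1%E); congr fine; exact: PPT.
- exact: (bm_int PPfin (bm_cst _)).
- exact: (bm_int PPfin bm_eps).
- by apply: (bm_int PPfin); apply: bmB; [exact: bm_cst | exact: bm_eps].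
Qed.

Lemma ab_gt0 : 0 < a * b.
Proof. by apply: mulr_gt0; [exact: a_gt0 | rewrite subr_gt0; exact: a_lt1]. Qed.

Lemma same_gt0 : 0 < 1 - 2 * a * b.
Proof. have h1 := a_gt0; have h2 := a_lt1; nra. Qed.

Lemma PP_null (N : set Omega) : measurable N -> P N = 0%E ->
  (P \x P)%E (N `*` setT `|` setT `*` N) = 0%E.
Proof.
move=> mN N0.
have h1 : (P \x P)%E (N `*` setT) = 0%E.
  rewrite product_measure1E // [X in (X * _)%E](_ : _ = 0%E);
    first [by rewrite mul0e | exact: N0].
have h2 : (P \x P)%E (setT `*` N) = 0%E.
  rewrite product_measure1E // [X in (_ * X)%E](_ : _ = 0%E);
    first [by rewrite mule0 | exact: N0].
have L : forall x y : \bar R, x = 0%E -> y = 0%E -> (x + y <= 0)%E.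
  by move=> x y -> ->; rewrite adde0.
apply/eqP; rewrite eq_le measure_ge0 andbT.
apply: (le_trans (measureU2 _ _ _)); [exact: measurableX | exact: measurableX |].
by apply: L; [exact: h1 | exact: h2].
Qed.

Lemma Pa_gt0 : (0 < P [set w | Y w = 1%R])%E.
Proof. rewrite Pa. rewrite lte_fin. exact: a_gt0. Qed.
Lemma Pb_gt0 : (0 < P [set w | Y w = (-1)%R])%E.
Proof. by rewrite Pb lte_fin subr_gt0 a_lt1. Qed.

End Prob.
Section ZSec.
Context (R : realType) (d : measure_display) (Omega : measurableType d)
  (P : probability Omega R) (Y : Omega -> R).
Hypothesis Ypm : forall w, Y w = 1 \/ Y w = -1.
Hypothesis mY : measurable_fun setT Y.
Hypothesis Ha : (0 < P [set w | Y w = 1%R] < 1)%E.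
Context (V : lmodType R) (ip : V -> V -> R).
Hypothesis hip : is_inner_product ip.
Context (r : R) (Z : Omega -> V).
Hypothesis HZn : forall w, ip (Z w) (Z w) = r ^+ 2.
Hypothesis HZm : forall v, measurable_fun setT (fun w => ip v (Z w)).
Hypothesis HZZ : measurable_fun setT (fun z : Omega * Omega => ip (Z z.1) (Z z.2)).

Local Notation a := (pa P Y).
Local Notation b := (1 - pa P Y).
Local Notation eps := (epsY Y).

Definition fv v w := ip v (Z w).
Definition Edef v := \int[P]_x (Y x * fv v x).
Definition dZ (z : Omega * Omega) := ip (Z z.1 - Z z.2) (Z z.1 - Z z.2).
Definition Tn := \int[(P \x P)%E]_z (eps z * dZ z).
Definition qf w := (Y w + a - b) / 2.
Definition ee v k (z : Omega * Omega) := qf z.1 *: Z z.1 + qf z.2 *: Z z.2 - k *: v.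
Definition Phi v k z := eps z * ip (ee v k z) (ee v k z).

Lemma bm_fv v : bm (fv v).
Proof.
split; first exact: HZm.
exists ((ip v v + r ^+ 2) / 2) => w; rewrite /fv -(HZn w); exact: ip_bound.
Qed.

Lemma dZE z : dZ z = 2 * r ^+ 2 - 2 * ip (Z z.1) (Z z.2).
Proof.
rewrite /dZ !(ipDl hip, ipDr hip, ipNl hip, ipNr hip) !HZn (ipC hip (Z z.2)); ring.
Qed.

Lemma bm_ZZ : bm (fun z : Omega * Omega => ip (Z z.1) (Z z.2)).
Proof.
split => //; exists (r ^+ 2) => z; apply: le_trans (ip_bound hip _ _) _.
by rewrite !HZn; lra.
Qed.

Lemma bm_dZ : bm dZ.
Proof.
have -> : dZ = (fun z => 2 * r ^+ 2 - 2 * ip (Z z.1) (Z z.2)).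
  by apply: funext => z; rewrite dZE.
by apply: bmB; [exact: bm_cst | apply: bmM; [exact: bm_cst | exact: bm_ZZ]].
Qed.

Lemma qfY w : qf w * ((1 - Y w * (a - b)) / 2) = a * b * Y w.
Proof. by rewrite /qf; case: (Ypm w) => ->; field. Qed.

Lemma PhiE v k z : Phi v k z =
  eps z * ((a - b) ^+ 2 * r ^+ 2 + k ^+ 2 * ip v v) + a * b * (eps z * dZ z)
  - 2 * k * (eps z * (qf z.1 * fv v z.1)) - 2 * k * (eps z * (qf z.2 * fv v z.2)).
Proof.
rewrite /Phi /ee dZE /fv /epsY.
rewrite !(ipDl hip, ipDr hip, ipNl hip, ipNr hip, ipZl hip, ipZr hip) !HZn.
rewrite (ipC hip (Z z.2) (Z z.1)) (ipC hip (Z z.1) v) (ipC hip (Z z.2) v).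
by rewrite /qf; case: (Ypm z.1) => ->; case: (Ypm z.2) => ->; field.
Qed.


Lemma bm_qf : bm qf.
Proof. by rewrite /qf; bmt; exact: bmY. Qed.

Lemma bm_qfv1 v : bm (fun z : Omega * Omega => qf z.1 * fv v z.1).
Proof. exact: (bm_comp measurable_fst (bmM bm_qf (bm_fv v))). Qed.
Lemma bm_qfv2 v : bm (fun z : Omega * Omega => qf z.2 * fv v z.2).
Proof. exact: (bm_comp measurable_snd (bmM bm_qf (bm_fv v))). Qed.

Lemma Phi_fun v k : Phi v k = (fun z =>
  eps z * ((a - b) ^+ 2 * r ^+ 2 + k ^+ 2 * ip v v) + a * b * (eps z * dZ z)
  - 2 * k * (eps z * (qf z.1 * fv v z.1)) - 2 * k * (eps z * (qf z.2 * fv v z.2))).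
Proof. by apply: funext => z; rewrite PhiE. Qed.

Ltac bmz v := repeat first [exact: bm_cst | exact: (bm_eps Ypm mY) | exact: bm_dZ
  | exact: (bm_qfv1 v) | exact: (bm_qfv2 v) | apply: bmB | apply: bmM | apply: bmD | apply: bmN].

Lemma bm_Phi v k : bm (Phi v k).
Proof. by rewrite Phi_fun; bmz v. Qed.

Lemma Phi_ge0 v k z : 0 <= Phi v k z.
Proof.
rewrite /Phi; apply: mulr_ge0; last exact: ip_ge0.
by case: (epsE Ypm z) => ->.
Qed.

Lemma Kid v k : \int[(P \x P)%E]_z Phi v k z =
  a * b * (2 * ((a - b) ^+ 2 * r ^+ 2 + k ^+ 2 * ip v v) + Tn - 4 * k * Edef v).
Proof.
have fin := PPfin P.
rewrite Phi_fun RintegralB //; last 2 first.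
  by apply: (bm_int fin); bmz v.
  by apply: (bm_int fin); bmz v.
rewrite RintegralB //; last 2 first.
  by apply: (bm_int fin); bmz v.
  by apply: (bm_int fin); bmz v.
rewrite RintegralD //; last 2 first.
  by apply: (bm_int fin); bmz v.
  by apply: (bm_int fin); bmz v.
rewrite RintegralZr //; last by apply: (bm_int fin); bmz v.
rewrite !RintegralZl //; try by apply: (bm_int fin); bmz v.
rewrite (Rint_eps P Ypm mY) -/Tn.
rewrite (Fub1 P Ypm mY (bmM bm_qf (bm_fv v))) (Fub2 P Ypm mY (bmM bm_qf (bm_fv v))).
rewrite (@eq_Rintegral _ _ _ P setT (fun x => a * b * (Y x * fv v x))); last first.
  by move=> x _ /=; rewrite mulrAC qfY mulrA.
rewrite RintegralZl -/(Edef v) //; last by apply: (bm_int (PT P)); bmt; [exact: bmY | exact: bm_fv].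
ring.
Qed.

Lemma objE : condE (P \x P)%E (diffLab Y) (fun z => - (ipnorm ip (Z z.1 - Z z.2)) ^+ 2)
  = (- Tn / (2 * a * b))%:E.
Proof.
rewrite /condE [fine _](_ : _ = 2 * a * b); last first.
  by rewrite -[2 * a * b]/(fine (2 * a * b)%:E); congr fine; exact: (PP_diff P Ypm mY).
rewrite [X in (X * _)%E](_ : _ = (- Tn)%:E); last first.
  under eq_integral do rewrite (ipnorm_sq hip).
  have hg : bm (fun z => - dZ z) by bmt; exact: bm_dZ.
  apply: etrans; first exact: (int_diff P Ypm mY hg).
  congr EFin.
  rewrite (@eq_Rintegral _ _ _ (P \x P)%E setT (fun z => (-1) * (eps z * dZ z))); last first.
    by move=> z _ /=; rewrite /dZ; ring.
  by rewrite RintegralZl -/Tn ?mulN1r //; apply: (bm_int (PPfin P)); bmz (0 : V).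
by rewrite -EFinM.
Qed.

Lemma eqZ_dZ z : Z z.1 = Z z.2 <-> dZ z = 0.
Proof.
split; first by rewrite /dZ => ->; rewrite subrr (ip0l hip).
by move/(ip_eq0 hip)/eqP; rewrite subr_eq0 => /eqP.
Qed.

Lemma mEq : measurable [set z : Omega * Omega | Z z.1 = Z z.2].
Proof.
rewrite (_ : [set z | Z z.1 = Z z.2] = dZ @^-1` [set 0]).
  by rewrite -[X in measurable X]setTI; apply: (bm_dZ.1) => //; exact: measurable_set1.
by apply/seteqP; split => z /=; rewrite eqZ_dZ.
Qed.

Lemma mNeq : measurable [set z : Omega * Omega | Z z.1 <> Z z.2].
Proof.
rewrite (_ : [set z | Z z.1 <> Z z.2] = ~` [set z | Z z.1 = Z z.2]) //.
apply: measurableC; exact: mEq.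
Qed.

Definition cY (cp cm : V) w := if Y w == 1 then cp else cm.

Lemma S_same (N : set Omega) (cp cm : V) : measurable N -> P N = 0%E ->
  (forall w, ~ N w -> Z w = cY cp cm w) ->
  condP (P \x P)%E [set z | Z z.1 = Z z.2] (sameLab Y) = 1%E.
Proof.
move=> mN N0 Hc.
apply: (@condP_full _ _ _ (P \x P)%E _ _ (N `*` setT `|` setT `*` N) (1 - 2 * a * b)).
- exact: mEq.
- exact: msame Ypm mY.
- by apply: measurableU; apply: measurableX.
- exact: PP_null.
- move=> z /= hs; case: (pselect (N z.1 \/ N z.2)) => [[h|h]|h]; [by right; left|by right; right|left].
  rewrite Hc; last by move=> h1; apply: h; left.
  rewrite Hc; last by move=> h1; apply: h; right.
  by rewrite /cY hs.
- exact: PP_same.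
- by rewrite gt_eqF //; exact: same_gt0.
Qed.

Lemma S_diff (N : set Omega) (cp cm : V) : measurable N -> P N = 0%E ->
  (forall w, ~ N w -> Z w = cY cp cm w) -> cp != cm ->
  condP (P \x P)%E [set z | Z z.1 <> Z z.2] (diffLab Y) = 1%E.
Proof.
move=> mN N0 Hc cpm.
apply: (@condP_full _ _ _ (P \x P)%E _ _ (N `*` setT `|` setT `*` N) (2 * a * b)).
- exact: mNeq.
- exact: mdiff Ypm mY.
- by apply: measurableU; apply: measurableX.
- exact: PP_null.
- move=> z /= hs; case: (pselect (N z.1 \/ N z.2)) => [[h|h]|h]; [by right; left|by right; right|left].
  rewrite Hc; last by move=> h1; apply: h; left.
  rewrite Hc; last by move=> h1; apply: h; right.
  have m1 : (-1 == 1 :> R) = false by apply/eqP; lra.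
  move: hs; rewrite /diffLab /= => hs.
  rewrite /cY; case: (Ypm z.1) => e1; case: (Ypm z.2) => e2; rewrite e1 e2 ?eqxx ?m1 in hs *.
  + by exfalso; apply: hs.
  + by move/eqP: cpm.
  + by move=> h1; move/eqP: cpm; apply; rewrite h1.
  + by exfalso; apply: hs.
- exact: PP_diff.
- by rewrite -mulrA gt_eqF // mulr_gt0 //; exact: ab_gt0 Ha.
Qed.

Lemma S_diff0 (N : set Omega) (c : V) : measurable N -> P N = 0%E ->
  (forall w, ~ N w -> Z w = c) ->
  condP (P \x P)%E [set z | Z z.1 <> Z z.2] (diffLab Y) = 0%E.
Proof.
move=> mN N0 Hc.
apply: (@condP_null _ _ _ (P \x P)%E _ _ (N `*` setT `|` setT `*` N)).
- exact: mNeq.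
- exact: mdiff Ypm mY.
- by apply: measurableU; apply: measurableX.
- exact: PP_null.
- move=> z [hs _]; case: (pselect (N z.1 \/ N z.2)) => [[h|h]|h].
  + by left.
  + by right.
  + exfalso; apply: hs; rewrite Hc; last by move=> h1; apply: h; left.
    by rewrite Hc //; move=> h1; apply: h; right.
Qed.

Lemma riskE v : (\int[P]_x ((- Y x * fv v x)%:E) = (- Edef v)%:E)%E.
Proof.
rewrite RintE; last by apply: (bm_int (PT P)); bmt; [exact: (bmY Ypm mY) | exact: bm_fv].
congr EFin; rewrite /Edef.
rewrite (@eq_Rintegral _ _ _ P setT (fun x => (-1) * (Y x * fv v x))); last first.
  by move=> x _ /=; ring.
rewrite RintegralZl ?mulN1r //; apply: (bm_int (PT P)); bmt; [exact: (bmY Ypm mY) | exact: bm_fv].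
Qed.

Lemma const_of_S : condP (P \x P)%E [set z | Z z.1 = Z z.2] (sameLab Y) = 1%E ->
  exists N cp cm, [/\ measurable N, P N = 0%E, (forall w, ~ N w -> Z w = cY cp cm w),
    ip cp cp = r ^+ 2 & ip cm cm = r ^+ 2].
Proof.
move=> hS.
have s0 : (1 - 2 * a * b) != 0 by rewrite gt_eqF //; exact: same_gt0.
have hAS := condP1 (PP_same P Ypm mY) s0 hS.
set B0 := sameLab Y `\` [set z | Z z.1 = Z z.2].
have mB0 : measurable B0 by apply: measurableD; [exact: msame Ypm mY | exact: mEq].
have hB0 : (P \x P)%E B0 = 0%E.
  exact: (measure_diff0 mEq (msame Ypm mY) (PP_same P Ypm mY) hAS).
have hint : (\int[P]_x (P \o xsection B0) x = 0)%E := hB0.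
have g0 : forall x, (0 <= (P \o xsection B0) x)%E by move=> x; exact: measure_ge0.
have mg := measurable_fun_xsection P mB0.
have [wp [Ywp gwp]] := ae0_pt g0 mg hint (mYset mY 1) (Pa_gt0 Ha).
have [wm [Ywm gwm]] := ae0_pt g0 mg hint (mYset mY (-1)) (Pb_gt0 Ypm mY Ha).
exists (xsection B0 wp `|` xsection B0 wm), (Z wp), (Z wm); split.
- by apply: measurableU; apply: measurable_xsection.
- by apply: null_U => //; apply: measurable_xsection.
- move=> w nN; rewrite /cY.
  have m1 : (-1 == 1 :> R) = false by apply/eqP; lra.
  case: (Ypm w) => Yw; rewrite Yw ?eqxx ?m1.
  + apply: contrapT => hne; apply: nN; left.
    rewrite /xsection /= inE /B0 /=; split; first by rewrite /sameLab /= Ywp Yw.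
    by move=> h; apply: hne.
  + apply: contrapT => hne; apply: nN; right.
    rewrite /xsection /= inE /B0 /=; split; first by rewrite /sameLab /= Ywm Yw.
    by move=> h; apply: hne.
- exact: HZn.
- exact: HZn.
Qed.

Lemma qf1 w : Y w = 1 -> qf w = a.
Proof. by rewrite /qf => ->; field. Qed.
Lemma qfm1 w : Y w = -1 -> qf w = - b.
Proof. by rewrite /qf => ->; field. Qed.

Lemma eps_pm x y : Y x = 1 -> Y y = -1 -> epsY Y (x, y) = 1.
Proof. by rewrite /epsY /= => -> ->; field. Qed.
Lemma eps_mp x y : Y x = -1 -> Y y = 1 -> epsY Y (x, y) = 1.
Proof. by rewrite /epsY /= => -> ->; field. Qed.

Lemma Phi0_ee v k z : Phi v k z = 0 -> epsY Y z = 1 ->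
  qf z.1 *: Z z.1 + qf z.2 *: Z z.2 = k *: v.
Proof.
rewrite /Phi => h e; rewrite e mul1r in h.
by have := ip_eq0 hip h; rewrite /ee => /eqP; rewrite subr_eq0 => /eqP.
Qed.

Lemma b_neq0 : b != 0.
Proof. by rewrite subr_eq0 eq_sym lt_eqF //; exact: a_lt1 Ha. Qed.
Lemma a_neq0 : a != 0.
Proof. by rewrite gt_eqF //; exact: a_gt0 Ha. Qed.

Lemma const_of_Phi0 v k : \int[(P \x P)%E]_z Phi v k z = 0 ->
  exists N cp cm, [/\ measurable N, P N = 0%E, (forall w, ~ N w -> Z w = cY cp cm w),
    ip cm cm = r ^+ 2 & a *: cp - b *: cm = k *: v].
Proof.
move=> h0.
pose g := fun z => (Phi v k z)%:E.
have mg : measurable_fun setT g by apply/measurable_EFinP; exact: (bm_Phi v k).1.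
have g0 : forall z, (0 <= g z)%E by move=> z; rewrite lee_fin; exact: Phi_ge0.
pose G := fubini_F P g.
have mG : measurable_fun setT G := @measurable_fun_fubini_tonelli_F _ _ _ _ _ P g mg g0.
have G0 : forall x, (0 <= G x)%E by move=> x; apply: integral_ge0 => y _; exact: g0.
have iG : (\int[P]_x G x = 0)%E.
  rewrite -(@fubini_tonelli1 _ _ _ _ _ P P g mg g0) /g RintE ?h0 //.
  exact: (bm_int (PPfin P) (bm_Phi v k)).
have sec0 : forall x, G x = 0%E -> exists N, [/\ measurable N, P N = 0%E &
    forall y, ~ N y -> Phi v k (x, y) = 0].
  move=> x Gx.
  have [N [mN N0 hN]] := @ae0_set _ _ _ P (fun y => g (x, y))
    (fun y => g0 (x, y)) (measurable_fun_pair2 x mg) Gx.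
  exists N; split => // y nN; apply: contrapT => hne; apply: nN; apply: hN.
  by rewrite /g eqe; apply/eqP.
have [w1 [Yw1 Gw1]] := ae0_pt G0 mG iG (mYset mY 1) (Pa_gt0 Ha).
have [N1 [mN1 N10 hN1]] := sec0 w1 Gw1.
pose cm := b^-1 *: (a *: Z w1 - k *: v).
have key1 : forall y, Y y = -1 -> ~ N1 y -> Z y = cm.
  move=> y Yy nN; have := Phi0_ee (hN1 y nN) (eps_pm Yw1 Yy).
  rewrite /= (qf1 Yw1) (qfm1 Yy) => h.
  rewrite /cm -h opprD addrA subrr add0r scaleNr opprK scalerA.
  by rewrite mulVf ?scale1r //; exact: b_neq0.
have mA2 : measurable ([set w | Y w = -1] `\` N1) by apply: measurableD => //; exact: mYset.
have PA2 : (0 < P ([set w | Y w = (-1)%R] `\` N1))%E.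
  apply: lt_le_trans (Pb_gt0 Ypm mY Ha) _.
  by rewrite (measureD_null (mYset mY (-1)) mN1 N10).
have [w0 [[Yw0 nN1w0] Gw0]] := ae0_pt G0 mG iG mA2 PA2.
have Zw0 : Z w0 = cm := key1 w0 Yw0 nN1w0.
have [N0 [mN0 N00 hN0]] := sec0 w0 Gw0.
pose cp := a^-1 *: (b *: cm + k *: v).
have key0 : forall y, Y y = 1 -> ~ N0 y -> Z y = cp.
  move=> y Yy nN; have := Phi0_ee (hN0 y nN) (eps_mp Yw0 Yy).
  rewrite /= (qfm1 Yw0) (qf1 Yy) Zw0 => h.
  rewrite /cp -h addrA scaleNr subrr add0r scalerA.
  by rewrite mulVf ?scale1r //; exact: a_neq0.
exists (N1 `|` N0), cp, cm; split.
- exact: measurableU.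
- exact: null_U.
- move=> w nN; rewrite /cY.
  have m1 : (-1 == 1 :> R) = false by apply/eqP; lra.
  case: (Ypm w) => Yw; rewrite Yw ?eqxx ?m1.
  + by apply: key0 => // h; apply: nN; right.
  + by apply: key1 => // h; apply: nN; left.
- by rewrite -Zw0 HZn.
- rewrite /cp scalerA mulfV ?scale1r; last exact: a_neq0.
  by rewrite addrAC subrr add0r.
Qed.

Lemma Phi_ae0 (N : set Omega) cp cm v k : measurable N -> P N = 0%E ->
  (forall w, ~ N w -> Z w = cY cp cm w) -> a *: cp - b *: cm = k *: v ->
  \int[(P \x P)%E]_z Phi v k z = 0.
Proof.
move=> mN N0 Hc hv.
apply: (Rint_ae0 (PPfin P) (bm_Phi v k) _ (PP_null mN N0)).
  by apply: measurableU; apply: measurableX.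
move=> z nM.
have n1 : ~ N z.1 by move=> h; apply: nM; left.
have n2 : ~ N z.2 by move=> h; apply: nM; right.
have m1 : (-1 == 1 :> R) = false by apply/eqP; lra.
rewrite /Phi /ee Hc // (Hc z.2) // /cY /epsY.
case: (Ypm z.1) => e1; case: (Ypm z.2) => e2; rewrite ?e1 ?e2 ?eqxx ?m1.
- by rewrite (_ : (1 - 1 * 1) / 2 = 0) ?mul0r //; field.
- rewrite (qf1 e1) (qfm1 e2) scaleNr -hv.
  rewrite [X in ip X X](_ : _ = 0); last by rewrite subrr.
  by rewrite (ip0l hip) mulr0.
- rewrite (qfm1 e1) (qf1 e2) scaleNr [- (b *: cm) + a *: cp]addrC -hv.
  rewrite [X in ip X X](_ : _ = 0); last by rewrite subrr.
  by rewrite (ip0l hip) mulr0.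
- by rewrite (_ : (1 - -1 * -1) / 2 = 0) ?mul0r //; field.
Qed.

End ZSec.

Lemma v0_gt (R : realType) (V : lmodType R) (ip : V -> V -> R) (hip : is_inner_product ip)
  (r a b : R) (cp cm : V) : ip cp cp = r ^+ 2 -> ip cm cm = r ^+ 2 -> cp != cm -> 0 < a -> 0 < b ->
  (a - b) ^+ 2 * r ^+ 2 < ip (a *: cp - b *: cm) (a *: cp - b *: cm).
Proof.
move=> hp hm ne a0 b0.
have h1 : 0 < ip (cp - cm) (cp - cm).
  rewrite lt_neqAle ip_ge0 // andbT eq_sym; apply/negP => /eqP /(ip_eq0 hip) /eqP.
  by rewrite subr_eq0; apply/negP.
rewrite !(ipDl hip, ipDr hip, ipNl hip, ipNr hip, ipZl hip, ipZr hip) hp hm (ipC hip cm cp).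
rewrite !(ipDl hip, ipDr hip, ipNl hip, ipNr hip) hp hm (ipC hip cm cp) in h1.
have hab : 0 < a * b by exact: mulr_gt0.
nra.
Qed.

Unset Implicit Arguments.

Theorem theorem1 (R : realType) (d : measure_display) (Omega : measurableType d)
  (P : probability Omega R) (n : nat) (Xs : set 'rV[R]_n)
  (X : Omega -> 'rV[R]_n) (Y : Omega -> R)
  (H V : lmodType R) (ipH : H -> H -> R) (ipV : V -> V -> R)
  (r : R) (phi : H -> V) (F1set : set ('rV[R]_n -> H)) :
  is_inner_product ipH ->
  is_inner_product ipV ->
  (forall w, Xs (X w)) ->
  (forall w, Y w = 1 \/ Y w = -1) ->
  measurable_fun setT Y ->
  (0 < P [set w | Y w = 1%R] < 1)%E ->
  0 < r ->
  (forall u, ipnorm ipV (phi u) = r) ->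
  (forall F1, F1set F1 ->
     (forall v : V, measurable_fun setT (fun w => ipV v (phi (F1 (X w))))) /\
     measurable_fun setT
       (fun z : Omega * Omega => ipV (phi (F1 (X z.1))) (phi (F1 (X z.2))))) ->
  Dset P X Y ipV phi F1set `&` Sset P X Y phi F1set !=set0 ->
  (forall F1, F1set F1 -> ~ Sset P X Y phi F1set F1 ->
     card_gt4 (ip_support P ipV (phi \o F1 \o X))) ->
  F1star P X Y ipV phi r F1set = Dset P X Y ipV phi F1set `&` Sset P X Y phi F1set.
Proof.
move=> hipH hipV HXs Ypm mY Ha r0 Hphi Hmeas [F0 [DF0 SF0]] _.
pose ZF (F : 'rV[R]_n -> H) := fun w => phi (F (X w)).
have HZn : forall F w, ipV (ZF F w) (ZF F w) = r ^+ 2.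
  by move=> F w; rewrite -(ipnorm_sq hipV) Hphi.
have HZm : forall F, F1set F -> forall v, measurable_fun setT (fun w => ipV v (ZF F w)).
  by move=> F hF; exact: (Hmeas F hF).1.
have HZZ : forall F, F1set F ->
    measurable_fun setT (fun z : Omega * Omega => ipV (ZF F z.1) (ZF F z.2)).
  by move=> F hF; exact: (Hmeas F hF).2.
pose a := pa P Y.
pose b := 1 - a.
have hab : 0 < a * b := ab_gt0 Ha.
have a0 : 0 < a := a_gt0 Ha.
have b0 : 0 < b by rewrite /b subr_gt0; exact: a_lt1 Ha.
pose T F := Tn P Y ipV (ZF F).
pose E F v := Edef P Y ipV (ZF F) v.
have objF : forall F, F1set F ->
  condE (P \x P)%E (diffLab Y)
    (fun z => - (ipnorm ipV (phi (F (X z.1)) - phi (F (X z.2)))) ^+ 2)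
  = (- T F / (2 * a * b))%:E.
  by move=> F hF; exact: (objE P Ypm mY hipV (HZn F) (HZZ F hF)).
have riskF : forall F w, F1set F ->
  risk P X Y ((fun u => ipV w (phi u)) \o F) = (- E F w)%:E.
  by move=> F w hF; exact: (riskE P Ypm mY hipV (HZn F) (HZm F hF) w).
have KF : forall F v k, F1set F ->
  0 <= a * b * (2 * ((a - b) ^+ 2 * r ^+ 2 + k ^+ 2 * ipV v v) + T F - 4 * k * E F v).
  move=> F v k hF.
  rewrite -(Kid P Ypm mY hipV (HZn F) (HZm F hF) (HZZ F hF) v k).
  apply: Rintegral_ge0 => z _; exact: Phi_ge0.
have Tle : forall F1, Dset P X Y ipV phi F1set F1 -> forall F, F1set F -> T F <= T F1.
  move=> F1; rewrite /Dset /= => -[hF1 Dm] F hF.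
  have := Dm F hF; rewrite (objF F1 hF1) (objF F hF) lee_fin => h.
  have h2 : 0 < 2 * a * b by rewrite -mulrA mulr_gt0.
  have := ler_wpM2r (ltW h2) h; rewrite !divfK ?gt_eqF //; lra.
have base : forall F1, Dset P X Y ipV phi F1set F1 -> Sset P X Y phi F1set F1 ->
  exists w0 k0, [/\ ipV w0 w0 = (r ^+ 2)^-1, 0 < k0,
    (a - b) ^+ 2 * r ^+ 2 < k0 ^+ 2 * ipV w0 w0,
    2 * ((a - b) ^+ 2 * r ^+ 2 + k0 ^+ 2 * ipV w0 w0) + T F1 - 4 * k0 * E F1 w0 = 0 &
    forall F w, F1set F -> ipV w w <= (r ^+ 2)^-1 -> E F w <= E F1 w0].
  move=> F1 DF [hF1 [hsame hdiff]].
  have [N [cp [cm [mN N0 Hc hp hm]]]] :=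
    const_of_S Ypm mY Ha hipV (HZn F1) (HZZ F1 hF1) hsame.
  have ne : cp != cm.
    apply/negP => /eqP e.
    have Hc' : forall w, ~ N w -> ZF F1 w = cp.
      by move=> w nw; rewrite Hc // /cY e; case: ifP.
    have h : condP (P \x P)%E [set z | phi (F1 (X z.1)) <> phi (F1 (X z.2))] (diffLab Y) = 0%E
      := S_diff0 Ypm mY hipV (HZn F1) (HZZ F1 hF1) mN N0 Hc'.
    by rewrite h in hdiff; case: hdiff => /eqP; rewrite eq_sym oner_eq0.
  pose v0 := a *: cp - b *: cm.
  have hv0 : (a - b) ^+ 2 * r ^+ 2 < ipV v0 v0 := v0_gt hipV hp hm ne a0 b0.
  have v0pos : 0 < ipV v0 v0.
    by apply: le_lt_trans hv0; apply: mulr_ge0; apply: sqr_ge0.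
  pose Nn := Num.sqrt (ipV v0 v0).
  have Nn0 : 0 < Nn by rewrite sqrtr_gt0.
  have Nn2 : Nn ^+ 2 = ipV v0 v0 by rewrite sqr_sqrtr // ltW.
  pose k0 := r * Nn.
  have k00 : 0 < k0 by rewrite mulr_gt0.
  pose w0 := k0^-1 *: v0.
  have kw : k0 *: w0 = v0 by rewrite /w0 scalerA mulfV ?gt_eqF // scale1r.
  have ww : ipV w0 w0 = (r ^+ 2)^-1.
    rewrite /w0 (ipZl hipV) (ipZr hipV) -[ipV v0 v0]Nn2 /k0.
    by field; rewrite ?gt_eqF //.
  have Phi0 := Phi_ae0 Ypm mY hipV (HZn F1) (HZm F1 hF1) (HZZ F1 hF1) mN N0 Hc
    (k := k0) (v := w0) (esym kw).
  have id0 := Kid P Ypm mY hipV (HZn F1) (HZm F1 hF1) (HZZ F1 hF1) w0 k0.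
  rewrite Phi0 -/a -/b -/(T F1) -/(E F1 w0) in id0.
  exists w0, k0; split => //.
  - rewrite ww /k0 (_ : (r * Nn) ^+ 2 * (r ^+ 2)^-1 = Nn ^+ 2); first by rewrite Nn2.
    by field; rewrite gt_eqF.
  - move: id0 => /esym /eqP; rewrite mulf_eq0 gt_eqF //= => /eqP //.
  move=> F w hF hw.
  have hK := KF F w k0 hF.
  have hS : 0 <= 2 * ((a - b) ^+ 2 * r ^+ 2 + k0 ^+ 2 * ipV w w) + T F - 4 * k0 * E F w.
    by move: hK; rewrite pmulr_rge0.
  have hT := Tle F1 DF F hF.
  have hw2 : k0 ^+ 2 * ipV w w <= k0 ^+ 2 * ipV w0 w0.
    by rewrite ww; apply: ler_wpM2l => //; exact: sqr_ge0.
  have hid : 2 * ((a - b) ^+ 2 * r ^+ 2 + k0 ^+ 2 * ipV w0 w0) + T F1 - 4 * k0 * E F1 w0 = 0.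
    by move: id0 => /esym /eqP; rewrite mulf_eq0 gt_eqF //= => /eqP.
  have : k0 * E F w <= k0 * E F1 w0 by lra.
  by rewrite ler_pM2l.
have sqle : forall w, ipnorm ipV w <= r^-1 -> ipV w w <= (r ^+ 2)^-1.
  move=> w hw; rewrite -(ipnorm_sq hipV) -exprVn !expr2.
  by apply: ler_pM => //; exact: ipnorm_ge0.
have nrm0 : forall w, ipV w w = (r ^+ 2)^-1 -> ipnorm ipV w <= r^-1.
  move=> w ww; rewrite /ipnorm ww -exprVn sqrtr_sqr ger0_norm //.
  by rewrite invr_ge0 ltW.
have hF0 : F1set F0 by case: SF0.
apply/seteqP; split => F.
- rewrite /F1star /= => -[hF [f2 [[w [hw ->]] [_ Fmin]]]].
  have [w0 [k0 [ww k00 hgap hid hbd]]] := base F0 DF0 SF0.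
  have w0n := nrm0 w0 ww.
  have := Fmin (fun u => ipV w0 (phi u)) F0 (ex_intro _ w0 (conj w0n erefl)) hF0.
  rewrite riskF // riskF // lee_fin lerN2 => hE.
  have hE' : k0 * E F0 w0 <= k0 * E F w by rewrite ler_pM2l.
  have hww := sqle w hw.
  have hT := Tle F0 DF0 F hF.
  have hK := KF F w k0 hF.
  have hS : 0 <= 2 * ((a - b) ^+ 2 * r ^+ 2 + k0 ^+ 2 * ipV w w) + T F - 4 * k0 * E F w.
    by move: hK; rewrite pmulr_rge0.
  have hw2 : k0 ^+ 2 * ipV w w <= k0 ^+ 2 * ipV w0 w0.
    by rewrite ww; apply: ler_wpM2l => //; exact: sqr_ge0.
  have hTeq : T F = T F0 by lra.
  have hwweq : k0 ^+ 2 * ipV w w = k0 ^+ 2 * ipV w0 w0 by lra.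
  have hS0 : 2 * ((a - b) ^+ 2 * r ^+ 2 + k0 ^+ 2 * ipV w w) + T F - 4 * k0 * E F w = 0.
    by lra.
  split.
  + move: DF0; rewrite /Dset /= => -[_ Dm]; split => // F' hF'.
    have := Dm F' hF'; rewrite (objF F0 hF0) (objF F' hF') (objF F hF) hTeq //.
  + rewrite /Sset /=; split => //.
    have hPhi : \int[(P \x P)%E]_z Phi P Y ipV (ZF F) w k0 z = 0.
      rewrite (Kid P Ypm mY hipV (HZn F) (HZm F hF) (HZZ F hF) w k0).
      by rewrite -/a -/b -/(T F) -/(E F w) hS0 mulr0.
    have [N [cp [cm [mN N0 Hc hm hv]]]] :=
      const_of_Phi0 Ypm mY Ha hipV (HZn F) (HZm F hF) (HZZ F hF) hPhi.
    split.
    * exact: (S_same Ypm mY Ha hipV (HZn F) (HZZ F hF) mN N0 Hc).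
    * apply: (S_diff Ypm mY Ha hipV (HZn F) (HZZ F hF) mN N0 Hc).
      apply/negP => /eqP e; rewrite e in hv.
      have : ipV (a *: cm - b *: cm) (a *: cm - b *: cm) = ipV (k0 *: w) (k0 *: w).
        by rewrite -/a -/b in hv; rewrite hv.
      rewrite -scalerBl !(ipZl hipV) !(ipZr hipV) hm => h.
      clear -h hgap hwweq; lra.
- move=> [DF SF]; have hF : F1set F by case: SF.
  have [w0 [k0 [ww k00 _ _ hbd]]] := base F DF SF.
  have w0n := nrm0 w0 ww.
  rewrite /F1star /=; split => //; exists (fun u => ipV w0 (phi u)); split.
  + by exists w0; split.
  + rewrite /Fstar /=; split.
    * exists (fun u => ipV w0 (phi u)), F; split => //; by exists w0.
    * move=> f2' F1' [w' [hw' ->]] hF1'.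
      rewrite !riskF // lee_fin lerN2; apply: hbd => //; exact: sqle.
Qed.
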